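(* For every session type $S$, $\mathrm{Sub}(S) \subseteq \mathrm{Sub}_{BU}(S)$, i.e. every top-down subterm of $S$ is a bottom-up subterm of $S$.
   Context: Session types (possibly containing free variables) are given by the grammar $T ::= \mathsf{end} \mid X \mid \mu X.T \mid {?}[T_1,\dots,T_n].S \mid {!}[T_1,\dots,T_n].S \mid \&\langle l_1:T_1,\dots,l_n:T_n\rangle \mid \oplus\langle l_1:T_1,\dots,l_n:T_n\rangle$ (input, output, branch, select), where $X$ ranges over type variables and $l_i$ over labels. Types are identified up to $\alpha$-conversion, and substitutions are capture-avoiding. The set of bottom-up subterms $\mathrm{Sub}_{BU}(T)$ is defined by recursion on $T$: $\mathrm{Sub}_{BU}(\mathsf{end}) = \{\mathsf{end}\}$; $\mathrm{Sub}_{BU}(X) = \{X\}$; $\mathrm{Sub}_{BU}(\mu X.T') = \{\mu X.T'\} \cup \{S[\mu X.T'/X] \mid S \in \mathrm{Sub}_{BU}(T')\}$; $\mathrm{Sub}_{BU}(\&\langle l_i:T_i\rangle_{i}) = \{\&\langle l_i:T_i\rangle_i\} \cup \bigcup_i \mathrm{Sub}_{BU}(T_i)$, and likewise for $\oplus$; $\mathrm{Sub}_{BU}({?}[T_1,\dots,T_n].S) = \{{?}[T_1,\dots,T_n].S\} \cup \bigcup_i \mathrm{Sub}_{BU}(T_i) \cup \mathrm{Sub}_{BU}(S)$, and likewise for ${!}$. The set of top-down subterms $\mathrm{Sub}(T)$ is the smallest set of types such that $T \in \mathrm{Sub}(T)$ and which is closed under: if $\mu X.T' \in \mathrm{Sub}(T)$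 then $T'[\mu X.T'/X] \in \mathrm{Sub}(T)$; if ${?}[T_1,\dots,T_n].S$ or ${!}[T_1,\dots,T_n].S$ is in $\mathrm{Sub}(T)$ then each $T_i$ and $S$ are in $\mathrm{Sub}(T)$; if $\&\langle l_i:T_i\rangle_i$ or $\oplus\langle l_i:T_i\rangle_i$ is in $\mathrm{Sub}(T)$ then each $T_i$ is in $\mathrm{Sub}(T)$. *)

(* Defs.v *)
(* Session types up to alpha-conversion, represented with
   de Bruijn indices (locally nameless-free, fully de Bruijn): a type
   variable X is an index; free variables are indices pointing beyond
   all enclosing binders. Alpha-equivalent types are syntactically equal. *)
From Stdlib Require Import List Arith PeanoNat.
Import ListNotations.

Definition label := nat.

Inductive stype : Type :=
| TEnd : stype
| TVar : nat -> stype
| TMu : stype -> stype                               (* mu X. T, X = index 0 *)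
| TIn : list stype -> stype -> stype
| TOut : list stype -> stype -> stype
| TBranch : list (label * stype) -> stype
| TSelect : list (label * stype) -> stype.

Fixpoint lift (c : nat) (T : stype) : stype :=
  match T with
  | TEnd => TEnd
  | TVar n => if c <=? n then TVar (S n) else TVar n
  | TMu t => TMu (lift (S c) t)
  | TIn ts s => TIn (map (lift c) ts) (lift c s)
  | TOut ts s => TOut (map (lift c) ts) (lift c s)
  | TBranch bs => TBranch (map (fun p => (fst p, lift c (snd p))) bs)
  | TSelect bs => TSelect (map (fun p => (fst p, lift c (snd p))) bs)
  end.

Fixpoint subst (j : nat) (u : stype) (T : stype) : stype :=
  match T with
  | TEnd => TEnd
  | TVar n => if n =? j then u else if j <? n then TVar (pred n) else TVar n
  | TMu t => TMu (subst (S j) (lift 0 u) t)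
  | TIn ts s => TIn (map (subst j u) ts) (subst j u s)
  | TOut ts s => TOut (map (subst j u) ts) (subst j u s)
  | TBranch bs => TBranch (map (fun p => (fst p, subst j u (snd p))) bs)
  | TSelect bs => TSelect (map (fun p => (fst p, subst j u (snd p))) bs)
  end.

Fixpoint SubBU (T : stype) : stype -> Prop :=
  match T with
  | TEnd => fun U => U = TEnd
  | TVar n => fun U => U = TVar n
  | TMu t => fun U => U = TMu t \/ exists S, SubBU t S /\ U = subst 0 (TMu t) S
  | TIn ts s => fun U =>
      U = TIn ts s \/ fold_right (fun t acc => SubBU t U \/ acc) False ts \/ SubBU s U
  | TOut ts s => fun U =>
      U = TOut ts s \/ fold_right (fun t acc => SubBU t U \/ acc) False ts \/ SubBU s U
  | TBranch bs => fun U =>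
      U = TBranch bs \/ fold_right (fun p acc => SubBU (snd p) U \/ acc) False bs
  | TSelect bs => fun U =>
      U = TSelect bs \/ fold_right (fun p acc => SubBU (snd p) U \/ acc) False bs
  end.

Inductive Sub (T : stype) : stype -> Prop :=
| Sub_refl : Sub T T
| Sub_mu : forall t, Sub T (TMu t) -> Sub T (subst 0 (TMu t) t)
| Sub_in_arg : forall ts s t, Sub T (TIn ts s) -> List.In t ts -> Sub T t
| Sub_in_cont : forall ts s, Sub T (TIn ts s) -> Sub T s
| Sub_out_arg : forall ts s t, Sub T (TOut ts s) -> List.In t ts -> Sub T t
| Sub_out_cont : forall ts s, Sub T (TOut ts s) -> Sub T s
| Sub_branch : forall bs l t, Sub T (TBranch bs) -> List.In (l, t) bs -> Sub T t
| Sub_select : forall bs l t, Sub T (TSelect bs) -> List.In (l, t) bs -> Sub T t.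

(* Main.v *)
Require Import Defs.
From Stdlib Require Import List.
From Stdlib Require Import Arith PeanoNat Lia.
Import ListNotations.

Section Ind.
Variable P : stype -> Prop.
Hypothesis HEnd : P TEnd.
Hypothesis HVar : forall n, P (TVar n).
Hypothesis HMu : forall t, P t -> P (TMu t).
Hypothesis HIn : forall ts s, Forall P ts -> P s -> P (TIn ts s).
Hypothesis HOut : forall ts s, Forall P ts -> P s -> P (TOut ts s).
Hypothesis HBr : forall bs, Forall (fun p => P (snd p)) bs -> P (TBranch bs).
Hypothesis HSel : forall bs, Forall (fun p => P (snd p)) bs -> P (TSelect bs).

Fixpoint stype_ind2 (t : stype) : P t :=
  match t with
  | TEnd => HEnd
  | TVar n => HVar n
  | TMu t => HMu t (stype_ind2 t)
  | TIn ts s => HIn ts s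
      ((fix f l := match l return Forall P l with
                  | [] => Forall_nil _
                  | x :: r => Forall_cons _ (stype_ind2 x) (f r) end) ts)
      (stype_ind2 s)
  | TOut ts s => HOut ts s
      ((fix f l := match l return Forall P l with
                  | [] => Forall_nil _
                  | x :: r => Forall_cons _ (stype_ind2 x) (f r) end) ts)
      (stype_ind2 s)
  | TBranch bs => HBr bs
      ((fix f l := match l return Forall (fun p => P (snd p)) l with
                  | [] => Forall_nil _
                  | x :: r => Forall_cons _ (stype_ind2 (snd x)) (f r) end) bs)
  | TSelect bs => HSel bs
      ((fix f l := match l return Forall (fun p => P (snd p)) l with
                  | [] => Forall_nil _
                  | x :: r => Forall_cons _ (stype_ind2 (snd x)) (f r) end) bs)
  end.
End Ind.

Ltac mapsolve H :=
  first [ f_equal; apply map_ext_in; intros [? ?] Hx;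
          rewrite Forall_forall in H; simpl; f_equal; apply (H _ Hx); lia
        | f_equal; apply map_ext_in; intros ? Hx;
          rewrite Forall_forall in H; apply (H _ Hx); lia ].

Lemma lift_lift : forall t i c, i <= c -> lift (S c) (lift i t) = lift i (lift c t).
Proof.
  induction t using stype_ind2; intros i c Hic; cbn [lift subst].
  - reflexivity.
  - repeat (cbn [lift subst]; match goal with |- context [?a <=? ?b] => destruct (Nat.leb_spec a b) end);
    try reflexivity; try lia.
  - f_equal. apply IHt. lia.
  - rewrite !map_map. f_equal; [|apply IHt; lia].
    apply map_ext_in. intros x Hx. rewrite Forall_forall in H. apply H; auto.
  - rewrite !map_map. f_equal; [|apply IHt; lia].
    apply map_ext_in. intros x Hx. rewrite Forall_forall in H. apply H; auto.
  - rewrite !map_map. f_equal. apply map_ext_in. intros [l x] Hx.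
    rewrite Forall_forall in H. simpl. f_equal. apply (H _ Hx); auto.
  - rewrite !map_map. f_equal. apply map_ext_in. intros [l x] Hx.
    rewrite Forall_forall in H. simpl. f_equal. apply (H _ Hx); auto.
Qed.

Lemma subst_lift : forall t c u, subst c u (lift c t) = t.
Proof.
  induction t using stype_ind2; intros c u; cbn [lift subst].
  - reflexivity.
  - repeat (cbn [lift subst]; match goal with |- context [?a <=? ?b] => destruct (Nat.leb_spec a b) end);
    repeat (cbn [lift subst]; match goal with |- context [?a =? ?b] => destruct (Nat.eqb_spec a b)
                          | |- context [?a <? ?b] => destruct (Nat.ltb_spec a b) end);
    try reflexivity; try lia.
  - f_equal. apply IHt.
  - rewrite !map_map. rewrite IHt. f_equal. rewrite <- map_id. apply map_ext_in.
    intros x Hx. rewrite Forall_forall in H. apply H; auto.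
  - rewrite !map_map. rewrite IHt. f_equal. rewrite <- map_id. apply map_ext_in.
    intros x Hx. rewrite Forall_forall in H. apply H; auto.
  - rewrite !map_map. f_equal. rewrite <- map_id. apply map_ext_in. intros [l x] Hx.
    rewrite Forall_forall in H. simpl. f_equal. apply (H _ Hx).
  - rewrite !map_map. f_equal. rewrite <- map_id. apply map_ext_in. intros [l x] Hx.
    rewrite Forall_forall in H. simpl. f_equal. apply (H _ Hx).
Qed.

Lemma lift_subst : forall t c j u, c <= j ->
  lift c (subst j u t) = subst (S j) (lift c u) (lift c t).
Proof.
  induction t using stype_ind2; intros c j u Hcj; cbn [lift subst].
  - reflexivity.
  - repeat (cbn [lift subst]; match goal with |- context [?a =? ?b] => destruct (Nat.eqb_spec a b)
                          | |- context [?a <? ?b] => destruct (Nat.ltb_spec a b)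
                          | |- context [?a <=? ?b] => destruct (Nat.leb_spec a b) end);
    try reflexivity; try lia; try (f_equal; lia).
  - f_equal. rewrite IHt by lia. f_equal. apply lift_lift. lia.
  - rewrite !map_map. rewrite IHt by lia. f_equal. apply map_ext_in.
    intros x Hx. rewrite Forall_forall in H. apply H; auto.
  - rewrite !map_map. rewrite IHt by lia. f_equal. apply map_ext_in.
    intros x Hx. rewrite Forall_forall in H. apply H; auto.
  - rewrite !map_map. f_equal. apply map_ext_in. intros [l x] Hx.
    rewrite Forall_forall in H. simpl. f_equal. apply (H _ Hx); auto.
  - rewrite !map_map. f_equal. apply map_ext_in. intros [l x] Hx.
    rewrite Forall_forall in H. simpl. f_equal. apply (H _ Hx); auto.
Qed.

Lemma subst_subst : forall t i j u v, i <= j ->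
  subst j u (subst i v t) = subst i (subst j u v) (subst (S j) (lift i u) t).
Proof.
  induction t using stype_ind2; intros i j u v Hij; cbn [lift subst].
  - reflexivity.
  - repeat (cbn [lift subst]; match goal with |- context [?a =? ?b] => destruct (Nat.eqb_spec a b)
                          | |- context [?a <? ?b] => destruct (Nat.ltb_spec a b) end);
    subst; try reflexivity; try lia; try (f_equal; lia);
    try (rewrite subst_lift; reflexivity); try (exfalso; lia).
  - f_equal. rewrite IHt by lia. rewrite lift_subst by lia.
    f_equal. f_equal. apply lift_lift. lia.
  - rewrite !map_map. rewrite IHt by lia. f_equal. apply map_ext_in.
    intros x Hx. rewrite Forall_forall in H. apply H; auto.
  - rewrite !map_map. rewrite IHt by lia. f_equal. apply map_ext_in.
    intros x Hx. rewrite Forall_forall in H. apply H; auto.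
  - rewrite !map_map. f_equal. apply map_ext_in. intros [l x] Hx.
    rewrite Forall_forall in H. simpl. f_equal. apply (H _ Hx); auto.
  - rewrite !map_map. f_equal. apply map_ext_in. intros [l x] Hx.
    rewrite Forall_forall in H. simpl. f_equal. apply (H _ Hx); auto.
Qed.

Inductive step : stype -> stype -> Prop :=
| st_mu t : step (TMu t) (subst 0 (TMu t) t)
| st_in_arg ts s t : In t ts -> step (TIn ts s) t
| st_in_cont ts s : step (TIn ts s) s
| st_out_arg ts s t : In t ts -> step (TOut ts s) t
| st_out_cont ts s : step (TOut ts s) s
| st_br bs l t : In (l, t) bs -> step (TBranch bs) t
| st_sel bs l t : In (l, t) bs -> step (TSelect bs) t.

Lemma fold_ex {A} (f : A -> Prop) l :
  fold_right (fun t acc => f t \/ acc) False l <-> exists x, In x l /\ f x.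
Proof.
  induction l; simpl; split.
  - tauto.
  - intros [? [[] _]].
  - intros [H|H]; [eauto|]. apply IHl in H. destruct H as [x [? ?]]; eauto.
  - intros [x [[<-|Hx] Hf]]; [auto|]. right. apply IHl. eauto.
Qed.

Lemma SubBU_refl : forall T, SubBU T T.
Proof. destruct T; simpl; auto. Qed.

Lemma closed : forall T U V, SubBU T U -> step U V -> SubBU T V.
Proof.
  induction T using stype_ind2; intros U V HU Hst; simpl in HU |- *.
  - subst; inversion Hst.
  - subst; inversion Hst.
  - destruct HU as [->|[S0 [HS ->]]].
    + inversion Hst; subst. right. exists T. split; [apply SubBU_refl|reflexivity].
    + destruct S0; cbn [subst] in Hst.
      * inversion Hst.
      * destruct (Nat.eqb_spec n 0).
        { inversion Hst; subst. right. exists T. split; [apply SubBU_refl|reflexivity]. }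
        destruct (0 <? n); inversion Hst.
      * inversion Hst; subst. right.
        exists (subst 0 (TMu S0) S0). split.
        { apply (IHT _ _ HS). constructor. }
        rewrite (subst_subst S0 0 0) by lia. reflexivity.
      * inversion Hst; subst; right.
        -- match goal with Hm : In _ (map _ _) |- _ => apply in_map_iff in Hm; destruct Hm as [x [<- Hx]] end.
           exists x. split; auto. apply (IHT _ _ HS). constructor; auto.
        -- eexists. split; [apply (IHT _ _ HS); apply st_in_cont|reflexivity].
      * inversion Hst; subst; right.
        -- match goal with Hm : In _ (map _ _) |- _ => apply in_map_iff in Hm; destruct Hm as [x [<- Hx]] end.
           exists x. split; auto. apply (IHT _ _ HS). constructor; auto.
        -- eexists. split; [apply (IHT _ _ HS); apply st_out_cont|reflexivity].
      * inversion Hst; subst; right.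
        match goal with Hm : In _ (map _ _) |- _ => apply in_map_iff in Hm; destruct Hm as [[l' x] [E Hx]] end. inversion E; subst.
        exists x. split; auto. apply (IHT _ _ HS). econstructor; eauto.
      * inversion Hst; subst; right.
        match goal with Hm : In _ (map _ _) |- _ => apply in_map_iff in Hm; destruct Hm as [[l' x] [E Hx]] end. inversion E; subst.
        exists x. split; auto. apply (IHT _ _ HS). econstructor; eauto.
  - rewrite Forall_forall in H.
    destruct HU as [->|[HU|HU]].
    + inversion Hst; subst.
      * right; left. apply (fold_ex (fun t => SubBU t V)). exists V. split; auto. apply SubBU_refl.
      * right; right. apply SubBU_refl.
    + right; left. apply (fold_ex (fun t => SubBU t U)) in HU. apply (fold_ex (fun t => SubBU t V)).
      destruct HU as [x [Hx HxU]]. exists x. split; auto. apply (H x Hx U); auto.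
    + right; right. eauto.
  - rewrite Forall_forall in H.
    destruct HU as [->|[HU|HU]].
    + inversion Hst; subst.
      * right; left. apply (fold_ex (fun t => SubBU t V)). exists V. split; auto. apply SubBU_refl.
      * right; right. apply SubBU_refl.
    + right; left. apply (fold_ex (fun t => SubBU t U)) in HU. apply (fold_ex (fun t => SubBU t V)).
      destruct HU as [x [Hx HxU]]. exists x. split; auto. apply (H x Hx U); auto.
    + right; right. eauto.
  - rewrite Forall_forall in H.
    destruct HU as [->|HU].
    + inversion Hst; subst.
      right. apply (fold_ex (fun p => SubBU (snd p) V)). exists (l, V). split; auto. apply SubBU_refl.
    + right. apply (fold_ex (fun p => SubBU (snd p) U)) in HU. apply (fold_ex (fun p => SubBU (snd p) V)).
      destruct HU as [x [Hx HxU]]. exists x. split; auto. apply (H x Hx U); auto.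
  - rewrite Forall_forall in H.
    destruct HU as [->|HU].
    + inversion Hst; subst.
      right. apply (fold_ex (fun p => SubBU (snd p) V)). exists (l, V). split; auto. apply SubBU_refl.
    + right. apply (fold_ex (fun p => SubBU (snd p) U)) in HU. apply (fold_ex (fun p => SubBU (snd p) V)).
      destruct HU as [x [Hx HxU]]. exists x. split; auto. apply (H x Hx U); auto.
Qed.

Theorem mainTheorem3 : forall S U : stype, Sub S U -> SubBU S U.
Proof.
  intros S U H. induction H;
    try apply SubBU_refl; apply (closed _ _ _ IHSub); first [apply st_in_cont | apply st_out_cont | econstructor; eauto].
Qed.
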